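(* Fix $m,n$. The following are equivalent. (1) For any triangulations $\mathcal{T},\mathcal{T}'$ of $C(m,n)$, $\mathcal{T}\leqslant_1\mathcal{T}'$ if and only if $\mathcal{T}\leqslant_2\mathcal{T}'$. (2) For any triangulations $\mathcal{T},\mathcal{T}'$ of $C(m,n)$ with $\mathcal{T}<_2\mathcal{T}'$, there exists a triangulation $\mathcal{T}''$ of $C(m,n)$ with $\mathcal{T}\lessdot_1\mathcal{T}''\leqslant_2\mathcal{T}'$. (3) For any triangulations $\mathcal{T},\mathcal{T}'$ of $C(m,n)$ with $\mathcal{T}<_2\mathcal{T}'$, there exists a triangulation $\mathcal{T}''$ of $C(m,n)$ with $\mathcal{T}\leqslant_2\mathcal{T}''\lessdot_1\mathcal{T}'$.
   Context: $C(m,n)$ is the cyclic polytope: the convex hull in $\mathbb{R}^n$ of $p_n(t_i)=(t_i,t_i^2,\dots,t_i^n)$, $i\in[m]$, $t_1<\dots<t_m$. A triangulation is a set of $(n+1)$-subsets of $[m]$ whose geometric simplices form a simplicial complex with union $C(m,n)$. For $U\subseteq[m]$ with $|U|=n+2$, $C(U,n)$ has two triangulations, the lower one (the lower facets of $C(U,n+1)$) and the upper one (the upper facets), where an $n$-subset $F\subseteq U$ is a lower (upper) facet iff each $w\in U\setminus F$ has an even (odd) number of elements of $F$ above it. If $\{S\in\mathcal{T}:S\subseteq U\}$ is the lower triangulation of $C(U,n)$, replacing it by the upper one gives an increasing bistellar flip $\mathcal{T}'$ of $\mathcal{T}$, written $\mathcal{T}\lessdot_1\mathcal{T}'$; $\leqslant_1$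 is the reflexive transitive closure of $\lessdot_1$. Each triangulation $\mathcal{T}$ gives a piecewise-linear map $\sigma_{\mathcal{T}}:C(m,n)\to\mathbb{R}^{n+1}$ mapping each of its simplices affinely with $p_n(t_s)\mapsto p_{n+1}(t_s)$; $\mathcal{T}\leqslant_2\mathcal{T}'$ iff $\sigma_{\mathcal{T}}(z)_{n+1}\leqslant\sigma_{\mathcal{T}'}(z)_{n+1}$ for all $z$, and $<_2$ means $\leqslant_2$ and $\neq$. *)

(* Defs.v *)
From HB Require Import structures.
From mathcomp Require Import all_boot all_order all_algebra.
From mathcomp Require Import reals.
From Stdlib Require Import Relations.
Set Implicit Arguments. Unset Strict Implicit. Unset Printing Implicit Defensive.
Import Order.TTheory GRing.Theory Num.Theory.
Local Open Scope ring_scope.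

Section CyclicPolytope.
Variables (R : realFieldType) (m n : nat) (t : 'I_m -> R).

Definition moment (k : nat) (x : R) : 'rV[R]_k := \row_(j < k) x ^+ j.+1.

Definition bary (S : {set 'I_m}) (z : 'rV[R]_n) (l : 'I_m -> R) : Prop :=
  [/\ forall i, 0 <= l i,
      forall i, i \notin S -> l i = 0,
      \sum_i l i = 1
    & z = \sum_i l i *: moment n (t i)].

Definition conv (S : {set 'I_m}) (z : 'rV[R]_n) : Prop := exists l, bary S z l.

Definition cyclic_polytope (z : 'rV[R]_n) : Prop := conv [set: 'I_m] z.

(* T is a triangulation of C(m,n): (n+1)-subsets whose simplices cover C(m,n)
   and pairwise intersect properly (in a common face). *)
Definition triangulation (T : {set {set 'I_m}}) : Prop :=
  [/\ forall S, S \in T -> #|S| = n.+1,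
      forall z, cyclic_polytope z <-> exists2 S, S \in T & conv S z
    & forall S S', S \in T -> S' \in T ->
        forall z, (conv S z /\ conv S' z) <-> conv (S :&: S') z].

(* Gale evenness: lower / upper facets of C(U,n+1), i.e. lower / upper
   triangulations of C(U,n), for |U| = n+2 *)
Definition lower_tri (U : {set 'I_m}) : {set {set 'I_m}} :=
  [set F : {set 'I_m} | [&& F \subset U, #|F| == n.+1 &
     [forall w in U :\: F, ~~ odd #|[set f in F | (val w < val f)%N]|]]].

Definition upper_tri (U : {set 'I_m}) : {set {set 'I_m}} :=
  [set F : {set 'I_m} | [&& F \subset U, #|F| == n.+1 &
     [forall w in U :\: F, odd #|[set f in F | (val w < val f)%N]|]]].

Definition inc_flip (T T' : {set {set 'I_m}}) : Prop :=
  exists U : {set 'I_m},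
    [/\ #|U| = n.+2,
        [set S in T | S \subset U] = lower_tri U
      & T' = (T :\: lower_tri U) :|: upper_tri U].

Definition le1 : relation {set {set 'I_m}} :=
  clos_refl_trans _ (fun A B => [/\ triangulation A, triangulation B & inc_flip A B]).

(* graph of the last coordinate of sigma_T : h = sigma_T(z)_{n+1} *)
Definition sigma_last (T : {set {set 'I_m}}) (z : 'rV[R]_n) (h : R) : Prop :=
  exists2 S, S \in T &
    exists l, bary S z l /\ h = \sum_i l i * t i ^+ n.+1.

Definition le2 (T T' : {set {set 'I_m}}) : Prop :=
  forall z h h', sigma_last T z h -> sigma_last T' z h' -> h <= h'.

Definition lt2 (T T' : {set {set 'I_m}}) : Prop := le2 T T' /\ T <> T'.

End CyclicPolytope.

(* Main.v *)
Require Import Defs.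
From HB Require Import structures.
From mathcomp Require Import all_boot all_order all_algebra.
From mathcomp Require Import reals boolp.
From Stdlib Require Import Relations.
Set Implicit Arguments. Unset Strict Implicit. Unset Printing Implicit Defensive.
Import Order.TTheory GRing.Theory Num.Theory.
Local Open Scope ring_scope.

Section Aux.
Variables (R : realFieldType) (m n : nat) (t : 'I_m -> R).
Hypothesis ht : forall i j : 'I_m, (val i < val j)%N -> t i < t j.

Definition hgt (l : 'I_m -> R) := \sum_i l i * t i ^+ n.+1.

Lemma momE (l : 'I_m -> R) (j : 'I_n) :
  (\sum_k l k *: moment n (t k)) 0 j = \sum_k l k * t k ^+ j.+1.
Proof.
rewrite summxE; apply: eq_bigr => k _; by rewrite mxE /moment mxE.
Qed.

Lemma dep_poly (g : {poly R}) S S' (z : 'rV[R]_n) l l' :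
  (size g <= n.+2)%N -> bary t S z l -> bary t S' z l' ->
  \sum_i (l i - l' i) * g.[t i] = g`_n.+1 * (hgt l - hgt l').
Proof.
move=> sg [l0 ls l1 lz] [l'0 l's l'1 l'z].
have HE : forall k, (k <= n)%N -> \sum_i (l i - l' i) * t i ^+ k = 0.
  case=> [|j] hj.
    under eq_bigr do rewrite expr0 mulr1.
    by rewrite sumrB l1 l'1 subrr.
  have := congr1 (fun M : 'rV[R]_n => M 0 (Ordinal hj)) (etrans (esym lz) l'z).
  rewrite /= !momE => e. under eq_bigr do rewrite mulrBl.
  by rewrite sumrB e subrr.
under eq_bigr do rewrite (horner_coef_wide _ sg) mulr_sumr.
rewrite exchange_big big_ord_recr /= big1 ?add0r.
  rewrite /hgt -sumrB mulr_sumr; apply: eq_bigr => i _.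
  by rewrite -mulrBl mulrCA.
move=> k _.
under eq_bigr do rewrite mulrCA.
by rewrite -mulr_sumr HE ?mulr0 // -ltnS.
Qed.

Lemma t_inj (i j : 'I_m) : t i = t j -> i = j.
Proof.
move=> e; case: (ltngtP (val i) (val j)) => [/ht|/ht|/val_inj //]; by rewrite e ltxx.
Qed.

Definition gp (A : {set 'I_m}) : {poly R} := \prod_(f <- enum A) ('X - (t f)%:P).

Lemma gp_size (A : {set 'I_m}) : size (gp A) = #|A|.+1.
Proof. by rewrite /gp size_prod_XsubC cardE. Qed.

Lemma gp_lead (A : {set 'I_m}) : (gp A)`_#|A| = 1.
Proof.
have : gp A \is monic by exact: monic_prod_XsubC.
by move/monicP; rewrite /lead_coef gp_size.
Qed.

Lemma gp_horner (A : {set 'I_m}) (x : R) : (gp A).[x] = \prod_(f in A) (x - t f).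
Proof.
rewrite /gp horner_prod big_enum /=.
by apply: eq_bigr => f _; rewrite hornerXsubC.
Qed.

Lemma gp_root (A : {set 'I_m}) (i : 'I_m) : i \in A -> (gp A).[t i] = 0.
Proof. by move=> iA; rewrite gp_horner (bigD1 i) //= subrr mul0r. Qed.

Lemma gp_neq0 (A : {set 'I_m}) (i : 'I_m) : i \notin A -> (gp A).[t i] != 0.
Proof.
move=> iA; rewrite gp_horner; apply/prodf_neq0 => f fA.
rewrite subr_eq0; apply/eqP => /t_inj e; by move: iA; rewrite e fA.
Qed.

Lemma gp_pos (A : {set 'I_m}) (w : 'I_m) : w \notin A -> ~~ odd #|[set f in A | (val w < val f)%N]| ->
  0 < (gp A).[t w].
Proof.
move=> wA ev; rewrite gp_horner (bigID (fun f => (val w < val f)%N)) /=.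
have -> : \prod_(i in A | (val w < val i)%N) (t w - t i) =
          \prod_(i in [set f in A | (val w < val f)%N]) (- (t i - t w)).
  by apply: eq_big => [i|i _]; rewrite ?inE ?opprB.
rewrite prodrN -signr_odd (negbTE ev) expr0 mul1r.
apply: mulr_gt0; apply: prodr_gt0 => i.
  by rewrite inE => /andP[_ /ht]; rewrite subr_gt0.
move=> /andP[iA]; rewrite -leqNgt leq_eqVlt => /orP[/eqP e|/ht]; last by rewrite subr_gt0.
by move: wA; rewrite -(val_inj e) iA.
Qed.

Lemma bary_uniq (S : {set 'I_m}) (z : 'rV[R]_n) l l' : #|S| = n.+1 ->
  bary t S z l -> bary t S z l' -> forall i, l i = l' i.
Proof.
move=> cS bl bl' s.
have bl0 := bl; have bl'0 := bl'.
case: bl0 => [_ ls _ _]; case: bl'0 => [_ l's _ _].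
case: (boolP (s \in S)) => sS; last by rewrite ls ?l's.
have cD : #|S :\ s| = n by move: cS; rewrite (cardsD1 s) sS add1n => -[].
have := dep_poly (g := gp (S :\ s)) _ bl bl'.
rewrite gp_size cD => /(_ (leqW (leqnn _))).
rewrite nth_default ?gp_size ?cD // mul0r (bigD1 s) //= big1 ?addr0.
  by move/eqP; rewrite mulf_eq0 (negbTE (gp_neq0 _)) ?orbF ?subr_eq0 ?inE ?eqxx // => /eqP.
move=> i ne; case: (boolP (i \in S)) => iS.
  by rewrite gp_root ?mulr0 // in_setD1 ne iS.
by rewrite ls ?l's // subrr mul0r.
Qed.


Lemma bary_sub (S S2 : {set 'I_m}) (z : 'rV[R]_n) l :
  S \subset S2 -> bary t S z l -> bary t S2 z l.
Proof.
move=> sub [l0 ls l1 lz]; split=> // i iS2; apply: ls.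
by apply: contra iS2; apply: (subsetP sub).
Qed.

Lemma bary_poly (S : {set 'I_m}) (z : 'rV[R]_n) l : bary t S z l -> cyclic_polytope t z.
Proof. by move=> b; exists l; apply: bary_sub b; apply: subsetT. Qed.

Lemma tri_fun (T : {set {set 'I_m}}) (S S' : {set 'I_m}) (z : 'rV[R]_n) l l' :
  triangulation n t T -> S \in T -> S' \in T -> bary t S z l -> bary t S' z l' ->
  hgt l = hgt l'.
Proof.
move=> [cT _ iT] ST S'T bl bl'.
have [l'' bl''] : conv t (S :&: S') z by apply/(iT _ _ ST S'T); split; [exists l|exists l'].
have e1 := bary_uniq (cT _ ST) bl (bary_sub (subsetIl _ _) bl'').
have e2 := bary_uniq (cT _ S'T) bl' (bary_sub (subsetIr _ _) bl'').
by rewrite /hgt; apply: eq_bigr => i _; rewrite e1 e2.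
Qed.

Lemma sigma_fun (T : {set {set 'I_m}}) (z : 'rV[R]_n) h h' :
  triangulation n t T -> sigma_last t T z h -> sigma_last t T z h' -> h = h'.
Proof.
move=> tT [S ST [l [bl ->]]] [S' S'T [l' [bl' ->]]].
exact: (tri_fun tT ST S'T bl bl').
Qed.

Lemma le2_refl (T : {set {set 'I_m}}) : triangulation n t T -> le2 n t T T.
Proof. by move=> tT z h h' s1 s2; rewrite (sigma_fun tT s1 s2). Qed.

Lemma le2_trans (A B C : {set {set 'I_m}}) :
  triangulation n t B -> le2 n t A B -> le2 n t B C -> le2 n t A C.
Proof.
move=> [_ cov _] lAB lBC z h h'' sA sC.
case: (sA) => S _ [l [bl _]].
have [S' S'B [l' bl']] := (proj1 (cov z)) (bary_poly bl).
have sB : sigma_last t B z (hgt l') by exists S' => //; exists l'.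
exact: le_trans (lAB _ _ _ sA sB) (lBC _ _ _ sB sC).
Qed.

Lemma flip_core (U S S' : {set 'I_m}) (z : 'rV[R]_n) l l' :
  S \in lower_tri n U -> #|S| = n.+1 -> S' \subset U ->
  bary t S z l -> bary t S' z l' ->
  [/\ hgt l' = hgt l + \sum_i l' i * (gp S).[t i],
      forall i, 0 <= l' i * (gp S).[t i]
    & forall i, i \in U :\: S -> 0 < (gp S).[t i]].
Proof.
move=> SL cS sub bl bl'.
have pos : forall i, i \in U :\: S -> 0 < (gp S).[t i].
  move=> i iUS; move: SL; rewrite inE => /and3P[_ _ /forall_inP H].
  apply: gp_pos; first by move: iUS; rewrite inE => /andP[].
  exact: H.
split=> //; last first.
  move=> i; case: bl' => [l'0 l's _ _].
  case: (boolP (i \in S')) => iS'; last by rewrite l's // mul0r.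
  case: (boolP (i \in S)) => iS; first by rewrite gp_root // mulr0.
  apply: mulr_ge0 => //; apply: ltW; apply: pos.
  by rewrite inE iS (subsetP sub).
have := dep_poly (g := gp S) _ bl bl'.
rewrite gp_size cS => /(_ (leqnn _)).
rewrite -cS gp_lead mul1r.
under eq_bigr do rewrite mulrBl.
rewrite sumrB big1 ?sub0r.
  by move/eqP; rewrite eqr_oppLR opprB => /eqP ->; rewrite addrC subrK.
move=> i _; case: bl => [_ ls _ _].
by case: (boolP (i \in S)) => iS; [rewrite gp_root ?mulr0 | rewrite ls ?mul0r].
Qed.


Lemma flip_le2 (A B : {set {set 'I_m}}) :
  triangulation n t A -> triangulation n t B -> inc_flip n A B -> le2 n t A B.
Proof.
move=> tA tB [U [cU hA eB]] z h h' [S SA [l [bl ->]]] [S' SB [l' [bl' ->]]].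
change (hgt l <= hgt l').
case: (boolP (S \in lower_tri n U)) => SL.
  move: (SB); rewrite eB inE => /orP[SA'|SU].
    move: SA'; rewrite inE => /andP[_ S'A].
    by rewrite (tri_fun tA SA S'A bl bl').
  have sub : S' \subset U by move: SU; rewrite inE => /and3P[].
  have [cA _ _] := tA.
  have [-> H _] := flip_core SL (cA _ SA) sub bl bl'.
  by rewrite lerDl; apply: sumr_ge0 => i _.
have SB' : S \in B by rewrite eB inE; apply/orP; left; rewrite inE SL.
by rewrite (tri_fun tB SB' SB bl bl').
Qed.

Definition unif (S : {set 'I_m}) (i : 'I_m) : R := if i \in S then (n.+1)%:R^-1 else 0.

Lemma unif_bary (S : {set 'I_m}) : #|S| = n.+1 ->
  bary t S (\sum_i unif S i *: moment n (t i)) (unif S).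
Proof.
move=> cS; split=> //.
- by move=> i; rewrite /unif; case: ifP => // _; rewrite invr_ge0 ler0n.
- by move=> i /negbTE iS; rewrite /unif iS.
- rewrite -big_mkcond /= sumr_const cS -[_ *+ _]mulr_natl mulfV //.
  by rewrite pnatr_eq0.
Qed.

Lemma unif_sub (S S2 : {set 'I_m}) (z : 'rV[R]_n) l2 :
  (forall i, unif S i = l2 i) -> bary t S2 z l2 -> S \subset S2.
Proof.
move=> e [_ ls _ _]; apply/subsetP => i iS; apply/negPn/negP => iS2.
have := ls _ iS2; rewrite -e /unif iS => /eqP; rewrite invr_eq0 pnatr_eq0 //.
Qed.

Lemma low_up (U S : {set 'I_m}) : #|S| = n.+1 -> #|U| = n.+2 ->
  S \in lower_tri n U -> S \in upper_tri n U -> False.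
Proof.
move=> cS cU; rewrite !inE => /and3P[sub _ /forall_inP H1] /and3P[_ _ /forall_inP H2].
have [w wUS] : exists w, w \in U :\: S.
  apply/set0Pn; apply: contraTneq (leqnn #|S|) => /eqP.
  rewrite setD_eq0 => sub2; rewrite -ltnNge.
  by have := subset_leq_card sub2; rewrite cS cU.
by move: (H1 _ wUS) (H2 _ wUS) => /negbTE ->.
Qed.

Lemma flip_strict (A B : {set {set 'I_m}}) :
  triangulation n t A -> triangulation n t B -> inc_flip n A B -> ~ le2 n t B A.
Proof.
move=> tA tB [U [cU hA eB]] le.
have [cA _ iA] := tA; have [cB covB _] := tB.
have [i0 i0U] : exists i0, i0 \in U by apply/set0Pn; rewrite -card_gt0 cU.
case: (arg_maxnP val i0U) => w wU0 wmax.
have wU : w \in U := wU0.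
set S := U :\ w.
have cS : #|S| = n.+1 by move: cU; rewrite (cardsD1 w) wU add1n => -[].
have SL : S \in lower_tri n U.
  rewrite inE subD1set cS eqxx /=; apply/forall_inP => w'.
  move=> /setDP [w'U]; rewrite in_setD1 w'U andbT negbK => /eqP ->.
  rewrite (_ : [set f in U :\ w | (val w < val f)%N] = set0) ?cards0 //.
  apply/setP => f; rewrite !inE; apply/negbTE; rewrite negb_and -leqNgt.
  case: (boolP (f \in U)) => fU; rewrite ?andbF ?orbT //.
  have hf : (val f <= val w)%N := wmax _ fU.
  by rewrite hf orbT.
have SA : S \in A by move: SL; rewrite -hA inE => /andP[].
set z := \sum_i unif S i *: moment n (t i).
have bl := unif_bary cS.
have [S' S'B [l' bl']] := (proj1 (covB z)) (bary_poly bl).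
have sA : sigma_last t A z (hgt (unif S)) by exists S => //; exists (unif S).
have sB : sigma_last t B z (hgt l') by exists S' => //; exists l'.
have lel := le _ _ _ sB sA.
move: (S'B); rewrite eB inE => /orP[S'A'|SU].
  move: S'A'; rewrite inE => /andP[S'L S'A].
  have [l'' bl''] : conv t (S :&: S') z.
    by apply/(iA _ _ SA S'A); split; [exists (unif S)|exists l'].
  have e := bary_uniq cS bl (bary_sub (subsetIl _ _) bl'').
  have sub := unif_sub e (bary_sub (subsetIr _ _) bl'').
  have eS : S = S' by apply/eqP; rewrite eqEcard (cB _ S'B) cS leqnn andbT; exact: sub.
  by move: S'L; rewrite -eS SL.
have sub : S' \subset U by move: SU; rewrite inE => /and3P[].
have [e H pos] := flip_core SL cS sub bl bl'.
have s0 : \sum_i l' i * (gp S).[t i] = 0.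
  apply/le_anti; rewrite sumr_ge0 // andbT.
  by move: lel; rewrite e gerDl.
have z0 := psumr_eq0P (fun i _ => H i) s0.
have bS : bary t S z l'.
  case: bl' => [l'0 l's l'1 l'z]; split=> // i iS.
  case: (boolP (i \in S')) => iS'; last exact: l's.
  have := z0 i isT; move/eqP; rewrite mulf_eq0 => /orP[/eqP //|].
  by rewrite (negbTE (lt0r_neq0 (pos i _))) // inE iS (subsetP sub).
have e2 := bary_uniq cS bl bS.
have sub2 := unif_sub e2 bl'.
have eS : S = S' by apply/eqP; rewrite eqEcard (cB _ S'B) cS leqnn andbT; exact: sub2.
by apply: (low_up cS cU SL); rewrite eS.
Qed.


Lemma le1_le2 (A B : {set {set 'I_m}}) :
  le1 n t A B -> triangulation n t A -> le2 n t A B.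
Proof.
move=> h; have {h} := @clos_rt_rt1n _ _ _ _ h; elim=> [x|x y w [tx ty fxy] _ IH] tx'.
  exact: le2_refl.
exact: le2_trans ty (flip_le2 tx ty fxy) (IH ty).
Qed.

Definition upset (T : {set {set 'I_m}}) : {set {set {set 'I_m}}} :=
  [set X | `[< triangulation n t X /\ le2 n t T X >]].
Definition downset (T : {set {set 'I_m}}) : {set {set {set 'I_m}}} :=
  [set X | `[< triangulation n t X /\ le2 n t X T >]].

Lemma upset_lt (T T1 : {set {set 'I_m}}) :
  triangulation n t T -> triangulation n t T1 -> inc_flip n T T1 ->
  (#|upset T1| < #|upset T|)%N.
Proof.
move=> tT tT1 f; apply: proper_card; rewrite properE; apply/andP; split.
  apply/subsetP => X; rewrite !inE => /asboolP [tX lX]; apply/asboolP; split=> //.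
  exact: le2_trans tT1 (flip_le2 tT tT1 f) lX.
apply/negP => /subsetP /(_ T) H.
have hT : T \in upset T by rewrite inE; apply/asboolP; split=> //; apply: le2_refl.
move: (H hT); rewrite inE => /asboolP [_ l].
exact: (flip_strict tT tT1 f l).
Qed.

Lemma downset_lt (T T1 : {set {set 'I_m}}) :
  triangulation n t T -> triangulation n t T1 -> inc_flip n T T1 ->
  (#|downset T| < #|downset T1|)%N.
Proof.
move=> tT tT1 f; apply: proper_card; rewrite properE; apply/andP; split.
  apply/subsetP => X; rewrite !inE => /asboolP [tX lX]; apply/asboolP; split=> //.
  exact: le2_trans tT lX (flip_le2 tT tT1 f).
apply/negP => /subsetP /(_ T1) H.
have hT1 : T1 \in downset T1 by rewrite inE; apply/asboolP; split=> //; apply: le2_refl.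
move: (H hT1); rewrite inE => /asboolP [_ l].
exact: (flip_strict tT tT1 f l).
Qed.


Lemma P2_P1 :
  (forall T T' : {set {set 'I_m}},
      triangulation n t T -> triangulation n t T' -> lt2 n t T T' ->
      exists T'' : {set {set 'I_m}},
        [/\ triangulation n t T'', inc_flip n T T'' & le2 n t T'' T']) ->
  forall T T' : {set {set 'I_m}},
      triangulation n t T -> triangulation n t T' ->
      (le1 n t T T' <-> le2 n t T T').
Proof.
move=> P2 T T' tT tT'; split; first by move=> h; exact: le1_le2 h tT.
suff H : forall k T, (#|upset T| < k)%N -> triangulation n t T ->
    le2 n t T T' -> le1 n t T T' by apply: H (ltnSn _) tT.
elim=> [//|k IH] {}T hk {}tT lTT'.
have [->|ne] := eqVneq T T'; first exact: rt_refl.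
have [T1 [tT1 f l1]] := P2 T T' tT tT' (conj lTT' (elimN eqP ne)).
apply: rt_trans (rt_step _ _ _ _ (And3 tT tT1 f)) _.
apply: IH => //; apply: leq_trans (upset_lt tT tT1 f) _; by rewrite -ltnS.
Qed.

Lemma P3_P1 :
  (forall T T' : {set {set 'I_m}},
      triangulation n t T -> triangulation n t T' -> lt2 n t T T' ->
      exists T'' : {set {set 'I_m}},
        [/\ triangulation n t T'', le2 n t T T'' & inc_flip n T'' T']) ->
  forall T T' : {set {set 'I_m}},
      triangulation n t T -> triangulation n t T' ->
      (le1 n t T T' <-> le2 n t T T').
Proof.
move=> P3 T T' tT tT'; split; first by move=> h; exact: le1_le2 h tT.
suff H : forall k T', (#|downset T'| < k)%N -> triangulation n t T' ->
    le2 n t T T' -> le1 n t T T' by apply: H (ltnSn _) tT'.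
elim=> [//|k IH] {}T' hk {}tT' lTT'.
have [->|ne] := eqVneq T T'; first exact: rt_refl.
have [T1 [tT1 l1 f]] := P3 T T' tT tT' (conj lTT' (elimN eqP ne)).
apply: rt_trans (rt_step _ _ _ _ (And3 tT1 tT' f)).
apply: IH => //; apply: leq_trans (downset_lt tT1 tT' f) _; by rewrite -ltnS.
Qed.

End Aux.

Theorem lemma3p3 (R : realType) (m n : nat) (t : 'I_m -> R)
  (ht : forall i j : 'I_m, (val i < val j)%N -> t i < t j) :
  let P1 := forall T T' : {set {set 'I_m}},
      triangulation n t T -> triangulation n t T' ->
      (le1 n t T T' <-> le2 n t T T') in
  let P2 := forall T T' : {set {set 'I_m}},
      triangulation n t T -> triangulation n t T' -> lt2 n t T T' ->
      exists T'' : {set {set 'I_m}},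
        [/\ triangulation n t T'', inc_flip n T T'' & le2 n t T'' T'] in
  let P3 := forall T T' : {set {set 'I_m}},
      triangulation n t T -> triangulation n t T' -> lt2 n t T T' ->
      exists T'' : {set {set 'I_m}},
        [/\ triangulation n t T'', le2 n t T T'' & inc_flip n T'' T'] in
  (P1 <-> P2) /\ (P1 <-> P3).
Proof.
move=> P1 P2 P3; rewrite {}/P1 {}/P2 {}/P3.
split; split.
- move=> P1 T T' tT tT' [l ne].
  have := (proj2 (P1 T T' tT tT')) l.
  move=> h; have h1 := @clos_rt_rt1n _ _ _ _ h; clear h.
  revert ne tT'; destruct h1 as [|y T'' [_ ty f] r]; intros ne tT'; first by [].
  exists y; split=> //.
  by apply/(P1 _ _ ty tT'); apply: clos_rt1n_rt.
- exact: P2_P1 ht.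
- move=> P1 T T' tT tT' [l ne].
  have := (proj2 (P1 T T' tT tT')) l.
  move=> h; have h1 := @clos_rt_rtn1 _ _ _ _ h; clear h.
  revert ne tT'; destruct h1 as [|y T'' [ty _ f] r]; intros ne tT'; first by [].
  exists y; split=> //.
  by apply/(P1 _ _ tT ty); apply: clos_rtn1_rt.
- exact: P3_P1 ht.
Qed.
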